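(* Let $q$ be a power of an odd prime, $c\in\mathbb{F}_q^*$, and $f(X)=c(X^{q+1}-X^2)$ on $\mathbb{F}_{q^2}$. Every cycle of the functional graph of $f$ whose length is greater than $1$ has even length.
   Context: The functional graph of $f$ is the directed graph on $\mathbb{F}_{q^2}$ with edges $x\to f(x)$; a cycle of length $n$ is a set of $n$ distinct elements $\alpha, f(\alpha),\dots,f^{(n-1)}(\alpha)$ with $f^{(n)}(\alpha)=\alpha$. *)

(* Defs.v *)
From HB Require Import structures.
From mathcomp Require Import all_boot all_order all_algebra all_field.
Set Implicit Arguments. Unset Strict Implicit. Unset Printing Implicit Defensive.
Import GRing.Theory.
Local Open Scope ring_scope.

Definition fmap (F : finFieldType) (q : nat) (c : F) (x : F) : F :=
  c * (x ^+ q.+1 - x ^+ 2).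

Definition is_cycle_of (T : eqType) (g : T -> T) (alpha : T) (n : nat) : Prop :=
  (0 < n)%N /\ iter n g alpha = alpha /\
  (forall i j : nat, (i < j < n)%N -> iter i g alpha != iter j g alpha).

(* Main.v *)
Require Import Defs.
From HB Require Import structures.
From mathcomp Require Import all_boot all_order all_algebra all_field.
Local Open Scope ring_scope.
From mathcomp Require Import ring.
Import GRing.Theory.

Lemma iter_mul_cyc (T : Type) (g : T -> T) a n m :
  iter n g a = a -> iter (m * n) g a = a.
Proof.
move=> H; elim: m => [|m IH] //=; by rewrite mulSn iterD IH H.
Qed.

Theorem lemma8 (F : finFieldType) (p k q : nat) (c : F) :
  prime p -> odd p -> (0 < k)%N -> q = (p ^ k)%N ->
  #|F| = (q ^ 2)%N ->
  c != 0 -> c ^+ q = c ->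
  forall (alpha : F) (n : nat),
    is_cycle_of (fmap q c) alpha n -> (1 < n)%N -> ~~ odd n.
Proof.
move=> pp op k0 qE cF c0 cq alpha n [n0 [itn dist]] n1.
have chF : p \in [pchar F].
  by apply: (card_finPcharP (n := (k * 2)%N)) => //; rewrite cF qE expnM.
have natq : [pchar F].-nat q.
  by rewrite qE pnatX (eq_pnat _ (pcharf_eq chF)) pnat_id.
have twoF : (2%:R : F) != 0.
  apply/negP; rewrite -(dvdn_pcharf chF) (dvdn_prime2 pp (isT : prime 2)) => /eqP H.
  by move: op; rewrite H.
have Fq2 : forall x : F, (x ^+ q) ^+ q = x.
  by move=> x; rewrite -exprM -[(q * q)%N]/(q ^ 2)%N -cF expf_card.
have key : forall x : F, (fmap q c x) ^+ q * x = - (x ^+ q * fmap q c x).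
  move=> x; rewrite /fmap exprS expr2.
  rewrite exprMn cq exprDn_pchar // exprNn_pchar // !exprMn Fq2.
  ring.
pose s i := iter i (fmap q c) alpha.
have f0 : fmap q c 0 = 0 by rewrite /fmap !expr0n /= subrr mulr0.
have a0 : alpha != 0.
  apply/negP => /eqP a0; have := dist 0%N 1%N; rewrite n1 /= a0 f0 eqxx.
  by move=> /(_ isT).
have nz : forall i, s i != 0.
  move=> i; apply/negP => /eqP si0.
  have sj : forall j, s (j + i)%N = 0.
    by elim=> [|j IH] //; rewrite addSn /s /= -/(s _) IH.
  have : s (i * n)%N = alpha by rewrite /s iter_mul_cyc.
  have -> : (i * n = (i * n - i) + i)%N.
    by rewrite subnK // leq_pmulr.
  by rewrite sj => a0'; move: a0; rewrite -a0' eqxx.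
pose r (x : F) := x ^+ q / x.
have rS : forall i, r (s i.+1) = - r (s i).
  move=> i; rewrite /r.
  have e : s i.+1 = fmap q c (s i) by [].
  have hx := nz i; have hy := nz i.+1.
  have -> : s i.+1 ^+ q / s i.+1 = (s i.+1 ^+ q * s i) / (s i * s i.+1).
    by field; rewrite hx hy.
  rewrite e key -e; field; by rewrite hx hy.
have ri : forall i, r (s i) = (-1) ^+ i * r alpha.
  by elim=> [|i IH]; rewrite ?expr0 ?mul1r // rS IH exprS mulN1r mulNr.
apply/negP => on.
have := ri n; rewrite [s n]itn -signr_odd on expr1 mulN1r => /eqP.
rewrite -subr_eq0 opprK -mulr2n -mulr_natl mulf_eq0 (negbTE twoF) /=.
rewrite /r mulf_eq0 invr_eq0 (negbTE a0) orbF expf_eq0 (negbTE a0) andbF.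
done.
Qed.
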